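(* In the basic contact-tracing model (described in the context), for every $T\in\mathbb{N}$, every probability distribution $D$ on $\{0,1,2,\dots\}$, every $p_T\in(0,1]$ and every $\beta>0$, the policy that at every step queries a node of smallest recency present in the frontier is optimal.
   Context: Basic model. Fix $T\in\mathbb{N}$, a probability distribution $D$ on $\{0,1,2,\dots\}$, a constant $p_T\in(0,1]$ and a discount parameter $\beta>0$. Every node (individual) has a recency $h\in\{0,1,\dots,T\}$. Each node (whether an index case or a child of an infected node) is infected independently with probability $p_T$. If a node of recency $h$ is infected, then for each $j\in\{0,\dots,h-1\}$ it has $Z_j\sim D$ children of recency $j$, with all these counts independent across $j$ and across nodes and independent of the infection statuses; an uninfected node has no children that can be accessed. Contact tracing: at step $t=0$ the frontier is a given finite multiset of index cases with known recencies. At each step $t=0,1,2,\dots$ while the frontier is nonempty, the tracer selects one node of the frontier and queries it, removing it from the frontier. The query reveals the node's infection status; if the node is infected and has recency $h$, benefit $e^{-\beta(h+t)}$ is collected and its children (with their recencies) are added to the frontier; if it is uninfected, benefit $0$ is collected and nothing is added. Nodes of the same recency are indistinguishable before they are queried, so a policy is a (possibly history-dependent) rule choosing at each step which recency present in the frontier to query. A policy is optimal if for every initial frontier it maximizes the expected total collected benefit $\mathbb{E}\big[\sum_{t\ge 0}(\text{benefit collected at step } t)\big]$ over all policies. *)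

(* Defs.v *)
From HB Require Import structures.
From mathcomp Require Import all_boot all_order all_algebra.
From mathcomp Require Import all_classical all_reals all_analysis.
Set Implicit Arguments. Unset Strict Implicit. Unset Printing Implicit Defensive.
Import Order.TTheory GRing.Theory Num.Theory.
Local Open Scope ring_scope.

(* A frontier is a finite multiset of recencies in {0,...,T}, represented by
   its multiplicity function. *)
Definition frontier (T : nat) := 'I_T.+1 -> nat.

(* One revealed observation: the queried recency h, together with
   None (node uninfected) or Some zs (node infected, zs`_j = number Z_j of
   children of recency j, for j < h). *)
Definition obs (T : nat) := ('I_T.+1 * option (seq nat))%type.

Definition policy (T : nat) := frontier T -> seq (obs T) -> 'I_T.+1.

Definition step_frontier (T : nat) (f : frontier T) (o : obs T) : frontier T :=
  fun i => (f i - (i == o.1) +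
            (if o.2 is Some zs then (if (i < o.1)%N then nth 0%N zs i else 0%N)
             else 0%N))%N.

Definition cur_frontier (T : nat) (f0 : frontier T) (hist : seq (obs T)) :
  frontier T := foldl (@step_frontier T) f0 hist.

Definition nonempty_frontier (T : nat) (f : frontier T) : bool :=
  [exists i : 'I_T.+1, (0 < f i)%N].

Definition valid_policy (T : nat) (pol : policy T) : Prop :=
  forall f0 hist, nonempty_frontier (cur_frontier f0 hist) ->
    (0 < cur_frontier f0 hist (pol f0 hist))%N.

Definition smallest_present (T : nat) (f : frontier T) : 'I_T.+1 :=
  odflt ord0 [pick i : 'I_T.+1 | (0 < f i)%N &&
                 [forall j : 'I_T.+1, (j < i)%N ==> (f j == 0%N)]].

Definition greedy_policy (T : nat) : policy T :=
  fun f0 hist => smallest_present (cur_frontier f0 hist).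

Section Value.
Context {R : realType}.
Local Open Scope ereal_scope.

(* E[g(Z_0,...,Z_{k-1})] for Z_j iid with law D (nonnegative g). *)
Fixpoint child_exp (D : nat -> R) (k : nat) (g : seq nat -> \bar R) : \bar R :=
  match k with
  | 0%N => g [::]
  | k'.+1 => \sum_(z <oo) ((D z)%:E * child_exp D k' (fun zs => g (z :: zs)))
  end.

(* value_n D p beta pol f0 n hist = expected benefit collected during the next
   n steps, when the history so far is hist (so the current step index is
   t = size hist) and policy pol is followed from initial frontier f0. *)
Fixpoint value_n (T : nat) (D : nat -> R) (p beta : R) (pol : policy T)
  (f0 : frontier T) (n : nat) (hist : seq (obs T)) : \bar R :=
  match n with
  | 0%N => 0
  | n'.+1 =>
    if nonempty_frontier (cur_frontier f0 hist) then
      let h := pol f0 hist in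
      let t := size hist in
      ((1 - p)%R)%:E * value_n D p beta pol f0 n' (rcons hist (h, None))
      + p%:E * ((expR (- beta * (nat_of_ord h + t)%:R))%:E
                + child_exp D h
                    (fun zs => value_n D p beta pol f0 n' (rcons hist (h, Some zs))))
    else 0
  end.

Definition total_value (T : nat) (D : nat -> R) (p beta : R) (pol : policy T)
  (f0 : frontier T) : \bar R :=
  ereal_sup (range (fun n => value_n D p beta pol f0 n [::])).

End Value.

(* Main.v *)
Require Import Defs.
From HB Require Import structures.
From mathcomp Require Import all_boot all_order all_algebra.
From mathcomp Require Import all_classical all_reals all_analysis.
From mathcomp Require Import zify.
Set Implicit Arguments. Unset Strict Implicit. Unset Printing Implicit Defensive.
Import Order.TTheory GRing.Theory Num.Theory.
Local Open Scope ring_scope.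
Section E.
Variable R : realType.
Variable D : nat -> R.
Hypothesis D0 : forall k, 0 <= D k.
Hypothesis D1 : (\sum_(k <oo) (D k)%:E = 1)%E.
Local Open Scope ereal_scope.

Notation E := (child_exp D).

Lemma E_ge0 k g : (forall zs, 0 <= g zs) -> 0 <= E k g.
Proof.
elim: k g => [|k IH] g g0 //=.
apply: nneseries_ge0 => z _ _; apply: mule_ge0; first by rewrite lee_fin.
exact: IH.
Qed.

Lemma E_le k g g' : (forall zs, 0 <= g zs) -> (forall zs, g zs <= g' zs) -> E k g <= E k g'.
Proof.
elim: k g g' => [|k IH] g g' g0 gg' //=.
apply: lee_nneseries => z.
  move=> _ _; apply: mule_ge0; first by rewrite lee_fin.
  exact: E_ge0.
move=> _.
by apply: lee_wpmul2l; [rewrite lee_fin|exact: IH].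
Qed.

Lemma E_ext k g g' : (forall zs, size zs = k -> g zs = g' zs) -> E k g = E k g'.
Proof.
elim: k g g' => [|k IH] g g' gg' /=; first by apply: gg'.
apply: eq_eseriesr => z _; congr (_ * _); apply: IH => zs s.
by apply: gg'; rewrite /= s.
Qed.

Lemma E_add k g g' : (forall zs, 0 <= g zs) -> (forall zs, 0 <= g' zs) ->
  E k (fun zs => g zs + g' zs) = E k g + E k g'.
Proof.
elim: k g g' => [|k IH] g g' g0 g'0 //=.
rewrite -nneseriesD; last 2 first.
- by move=> z _ _; apply: mule_ge0; [rewrite lee_fin|exact: E_ge0].
- by move=> z _ _; apply: mule_ge0; [rewrite lee_fin|exact: E_ge0].
apply: eq_eseriesr => z _; rewrite IH //; apply: ge0_muleDr; exact: E_ge0.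
Qed.

Lemma E_scale k (x : R) g : (forall zs, 0 <= g zs) ->
  E k (fun zs => x%:E * g zs) = x%:E * E k g.
Proof.
elim: k g => [|k IH] g g0 //=.
rewrite -nneseriesZl; last by move=> z _; apply: mule_ge0; [rewrite lee_fin|exact: E_ge0].
by apply: eq_eseriesr => z _; rewrite IH // muleCA.
Qed.

Lemma D_pos : exists z, (0 < D z)%R.
Proof.
apply/not_existsP => H.
have : \sum_(k <oo) (D k)%:E = 0.
  apply: eseries0 => i _ _; apply/eqP; rewrite eqe eq_le D0 andbT.
  by rewrite leNgt; apply/negP => /(fun h => H i h).
by rewrite D1 => /eqP; rewrite onee_eq0.
Qed.

Lemma E_cst k (x : \bar R) : 0 <= x -> E k (fun _ => x) = x.
Proof.
move=> x0; elim: k => [|k IH] //=.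
rewrite IH.
case: x x0 {IH} => [r| |] //= r0.
- under eq_eseriesr do rewrite muleC.
  by rewrite nneseriesZl ?D1 ?mule1 // => z _; rewrite lee_fin.
- case: D_pos => z Dz.
  apply/eqP; rewrite eq_le leey /=.
  have u0 : forall n, (0 <= n)%N -> true -> 0 <= (D n)%:E * +oo.
    by move=> i _ _; apply: mule_ge0; rewrite ?lee_fin ?leey.
  apply: le_trans (nneseries_lim_ge z.+1 u0).
  rewrite big_nat_recr //= gt0_muley ?lte_fin // addey //.
  rewrite gt_eqF // (lt_le_trans ltNy0) //.
  by apply: sume_ge0 => i _; apply: mule_ge0; rewrite ?lee_fin ?leey.
Qed.

Lemma E_series k (g : nat -> seq nat -> \bar R) : (forall i zs, 0 <= g i zs) ->
  \sum_(i <oo) E k (g i) = E k (fun zs => \sum_(i <oo) g i zs).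
Proof.
elim: k g => [|k IH] g g0 //=.
rewrite (@nneseries_interchange _ (fun i z => (D z)%:E * E k (fun zs => g i (z :: zs)))); last first.
  by move=> i z; apply: mule_ge0; [rewrite lee_fin|exact: E_ge0].
apply: eq_eseriesr => z _.
rewrite nneseriesZl; last by move=> i _; exact: E_ge0.
by rewrite IH.
Qed.

Lemma E_swap a b (g : seq nat -> seq nat -> \bar R) : (forall x y, 0 <= g x y) ->
  E a (fun x => E b (fun y => g x y)) = E b (fun y => E a (fun x => g x y)).
Proof.
elim: a g => [|a IH] g g0 //=.
transitivity (\sum_(z <oo) E b (fun y => (D z)%:E * E a (fun x => g (z :: x) y))).
  apply: eq_eseriesr => z _; rewrite IH // E_scale //.
  by move=> y; apply: E_ge0.
rewrite E_series //.
by move=> i zs; apply: mule_ge0; [rewrite lee_fin|exact: E_ge0].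
Qed.

Lemma E_split a b g : E (a + b) g = E a (fun x => E b (fun y => g (x ++ y))).
Proof.
elim: a g => [|a IH] g //=.
by apply: eq_eseriesr => z _; rewrite IH.
Qed.

End E.
Section Main.
Variable R : realType.
Variable T : nat.
Variable D : nat -> R.
Variables p beta : R.
Hypothesis D0 : forall k, 0 <= D k.
Hypothesis D1 : (\sum_(k <oo) (D k)%:E = 1)%E.
Hypothesis p0 : 0 < p.
Hypothesis p1 : p <= 1.
Hypothesis beta0 : 0 < beta.

Local Open Scope ereal_scope.
Notation E := (child_exp D).
Let Ege0 := E_ge0 D0.
Let Ele := E_le D0.
Let Eadd := E_add D0.
Let Escale := E_scale D0.
Let Ecst := E_cst D0 D1.
Let Eswap := E_swap D0.
Let Eseries := E_series D0.
Notation fr := (frontier T).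
Definition gm : R := expR (- beta).
Lemma gm0 : (0 <= gm)%R. Proof. exact: expR_ge0. Qed.
Lemma gm1 : (gm <= 1)%R.
Proof. by rewrite /gm expR_le1 oppr_le0 ltW. Qed.
Lemma q0 : (0 <= 1 - p)%R. Proof. by rewrite subr_ge0. Qed.
Lemma pp0 : (0 <= p)%R. Proof. exact: ltW. Qed.

Definition Bp (x y : \bar R) := (1 - p)%:E * x + p%:E * y.

Lemma q0E : 0 <= (1 - p)%:E. Proof. rewrite lee_fin; exact: q0. Qed.
Lemma pp0E : 0 <= p%:E. Proof. rewrite lee_fin; exact: pp0. Qed.
Lemma gm0E : 0 <= gm%:E. Proof. rewrite lee_fin; exact: gm0. Qed.
Lemma gmn0E n : 0 <= (gm ^+ n)%:E. Proof. rewrite lee_fin; apply: exprn_ge0; exact: gm0. Qed.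

Lemma Bp_ge0 x y : 0 <= x -> 0 <= y -> 0 <= Bp x y.
Proof.
move=> x0 y0; apply: adde_ge0; apply: mule_ge0 => //; [exact: q0E|exact: pp0E].
Qed.

Lemma Bp_le x y x' y' : 0 <= x -> 0 <= y -> x <= x' -> y <= y' -> Bp x y <= Bp x' y'.
Proof.
move=> x0 y0 xx yy; apply: leeD; apply: lee_wpmul2l => //; [exact: q0E|exact: pp0E].
Qed.

Lemma Bp_add x y x' y' : 0 <= x -> 0 <= y -> 0 <= x' -> 0 <= y' ->
  Bp (x + x') (y + y') = Bp x y + Bp x' y'.
Proof.
move=> x0 y0 x'0 y'0; rewrite /Bp (ge0_muleDr _ x0 x'0) (ge0_muleDr _ y0 y'0).
exact: addeACA.
Qed.

Lemma Bp_scale (c : R) x y : 0 <= x -> 0 <= y -> Bp (c%:E * x) (c%:E * y) = c%:E * Bp x y.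
Proof.
move=> x0 y0; rewrite /Bp ge0_muleDr.
- by rewrite muleCA [X in _ + X]muleCA.
- apply: mule_ge0 => //; exact: q0E.
- apply: mule_ge0 => //; exact: pp0E.
Qed.

Lemma Bp_cst x : 0 <= x -> Bp x x = x.
Proof.
move=> x0; rewrite /Bp -ge0_muleDl; [|exact: q0E|exact: pp0E].
by rewrite -EFinD subrK mul1e.
Qed.

Lemma Bp_E k g g' : (forall zs, 0 <= g zs) -> (forall zs, 0 <= g' zs) ->
  Bp (E k g) (E k g') = E k (fun zs => Bp (g zs) (g' zs)).
Proof.
move=> g0 g'0; rewrite /Bp Eadd //; last 2 first.
- by move=> zs; apply: mule_ge0 => //; exact: q0E.
- by move=> zs; apply: mule_ge0 => //; exact: pp0E.
by rewrite !Escale.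
Qed.

Definition sf := @step_frontier T.
Definition sp := @smallest_present T.
Definition ne := @nonempty_frontier T.

Fixpoint G (r : bool) (n : nat) (K : fr) (u : nat -> \bar R) : \bar R :=
  match n with
  | 0%N => 0
  | n'.+1 =>
    if ne K then
      Bp (gm%:E * G r n' (sf K (sp K, None)) u)
         ((if r then (gm ^+ sp K)%:E else 0) +
          gm%:E * E (sp K) (fun zs => G r n' (sf K (sp K, Some zs)) u))
    else u n'.+1
  end.

Definition W n K := G true n K (fun _ => 0).
Definition Lam K v n := G false n K v.

Lemma G_ge0 r n K u : (forall k, 0 <= u k) -> 0 <= G r n K u.
Proof.
move=> u0; elim: n K => [|n IH] K //=.
case: ifP => // _; apply: Bp_ge0.
  by apply: mule_ge0 => //; exact: gm0E.
apply: adde_ge0; first by case: (r) => //; exact: gmn0E.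
apply: mule_ge0; first exact: gm0E.
exact: Ege0.
Qed.

Lemma G_le r n K u u' : (forall k, 0 <= u k) -> (forall k, u k <= u' k) ->
  G r n K u <= G r n K u'.
Proof.
move=> u0 uu; elim: n K => [|n IH] K //=.
case: ifP => // _; apply: Bp_le.
- by apply: mule_ge0; [exact: gm0E|exact: G_ge0 u0].
- apply: adde_ge0; first by case: (r) => //; exact: gmn0E.
  apply: mule_ge0; first exact: gm0E.
  by apply: Ege0 => zs; exact: G_ge0 u0.
- by apply: lee_wpmul2l; [exact: gm0E|exact: IH].
apply: leeD2l; apply: lee_wpmul2l; first exact: gm0E.
by apply: Ele => // zs; exact: G_ge0 u0.
Qed.

Lemma G_ext r n K u u' : (forall k, (0 < k)%N -> u k = u' k) ->
  G r n K u = G r n K u'.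
Proof.
move=> uu; elim: n K => [|n IH] K //=.
case: ifP => _; last exact: uu.
by rewrite IH; congr (Bp _ (_ + _ * _)); apply: E_ext => zs _; rewrite IH.
Qed.


Definition fadd (A B : fr) : fr := fun i => (A i + B i)%N.
Definition fz : fr := fun _ => 0%N.
Definition e1 (x : 'I_T.+1) : fr := fun i => nat_of_bool (i == x).
Definition fsub1 (K : fr) (x : 'I_T.+1) : fr := fun i => (K i - (i == x))%N.
Definition ch (x : nat) (zs : seq nat) : fr := fun i => if (i < x)%N then nth 0%N zs i else 0%N.
Definition bK (b : bool) (K : fr) : fr := if b then K else fz.

Lemma ne_pos K i : (0 < K i)%N -> ne K.
Proof. by move=> Ki; apply/existsP; exists i. Qed.

Lemma ne_zero K : ~~ ne K -> forall i, K i = 0%N.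
Proof.
move=> /existsP nK i; apply/eqP; rewrite -leqn0 leqNgt; apply/negP => Ki.
by apply: nK; exists i.
Qed.

Lemma sp_spec K : ne K -> (0 < K (sp K))%N /\ forall j : 'I_T.+1, (j < sp K)%N -> K j = 0%N.
Proof.
move=> /existsP [i0 Ki0].
rewrite /sp /smallest_present; case: pickP => [i /andP[Ki /forallP Hj]|H] /=.
  by split => // j ji; apply/eqP; move: (Hj j); rewrite ji.
exfalso.
case: (@arg_minnP _ i0 (fun i : 'I_T.+1 => (0 < K i)%N) (fun i : 'I_T.+1 => nat_of_ord i) Ki0) => i Ki Hmin.
move: (H i); rewrite Ki /=; move/negP; apply; apply/forallP => j; apply/implyP => ji.
apply/eqP; apply/eqP; rewrite -leqn0 leqNgt; apply/negP => Kj.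
by move: (Hmin j Kj); rewrite leqNgt ji.
Qed.

Lemma sp_eq K (i : 'I_T.+1) : (0 < K i)%N -> (forall j : 'I_T.+1, (j < i)%N -> K j = 0%N) -> sp K = i.
Proof.
move=> Ki Hj; have nK := ne_pos Ki.
have [Ks Hs] := sp_spec nK.
apply/val_inj => /=; apply/eqP; rewrite eqn_leq; apply/andP; split.
  by rewrite leqNgt; apply/negP => /Hs; move: Ki; case: (K i).
by rewrite leqNgt; apply/negP => /Hj; move: Ks; case: (K (sp K)).
Qed.

Lemma sf_None K x : sf K (x, None) = fsub1 K x.
Proof. by apply: funext => i; rewrite /sf /step_frontier /= addn0. Qed.

Lemma sf_Some K x zs : sf K (x, Some zs) = fadd (fsub1 K x) (ch x zs).
Proof. by []. Qed.

Lemma fadd0 K : fadd K fz = K.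
Proof. by apply: funext => i; rewrite /fadd /fz addn0. Qed.

Lemma fadd0l K : fadd fz K = K.
Proof. by apply: funext => i; rewrite /fadd /fz add0n. Qed.

Lemma faddC A B : fadd A B = fadd B A.
Proof. by apply: funext => i; rewrite /fadd addnC. Qed.

Lemma faddA A B C : fadd A (fadd B C) = fadd (fadd A B) C.
Proof. by apply: funext => i; rewrite /fadd addnA. Qed.

Lemma fsub1_add Z K x : (0 < K x)%N -> fadd Z (fsub1 K x) = fsub1 (fadd Z K) x.
Proof.
move=> Kx; apply: funext => i; rewrite /fadd /fsub1.
case: eqP => [->|_]; last by rewrite !subn0.
by rewrite addnBA.
Qed.

Lemma fsub1_e1 x : fsub1 (e1 x) x = fz.
Proof. by apply: funext => i; rewrite /fsub1 /e1 /fz subnn. Qed.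

Definition NE (x : nat) (phi : bool -> fr -> \bar R) :=
  Bp (phi false fz) (E x (fun zs => phi true (ch x zs))).

Lemma rew_ge0 r b x : 0 <= (if r && b then (gm ^+ x)%:E else 0).
Proof. by case: (r && b) => //; exact: gmn0E. Qed.

Lemma G_step r n K u : (forall k, 0 <= u k) -> ne K ->
  G r n.+1 K u = NE (sp K) (fun b C => (if r && b then (gm ^+ sp K)%:E else 0) +
                         gm%:E * G r n (fadd (fsub1 K (sp K)) C) u).
Proof.
move=> u0 nK; rewrite /= nK /NE /= sf_None fadd0 andbF add0e andbT.
congr Bp; rewrite Eadd; last 2 first.
- by move=> _; case: (r) => //; exact: gmn0E.
- by move=> zs; apply: mule_ge0; [exact: gm0E|exact: G_ge0].
rewrite Ecst; last by case: (r) => //; exact: gmn0E.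
by rewrite Escale //; move=> zs; exact: G_ge0.
Qed.

Lemma block r n (Z K : fr) u : (forall i j : 'I_T.+1, (0 < K i)%N -> (0 < Z j)%N -> (i <= j)%N) ->
  G r n (fadd Z K) u = G r n K (fun k => G r k Z u).
Proof.
elim: n K => [|n IH] K HK //=.
case nK: (ne K); last first.
  have -> : fadd Z K = Z.
    by apply: funext => i; rewrite /fadd (ne_zero (negbT nK)) addn0.
  by [].
have [Ks Hs] := sp_spec nK.
have spZK : sp (fadd Z K) = sp K.
  apply: sp_eq; first by rewrite /fadd addn_gt0 Ks orbT.
  move=> j js; rewrite /fadd Hs // addn0.
  apply/eqP; rewrite -leqn0 leqNgt; apply/negP => Zj.
  by move: (HK _ _ Ks Zj); rewrite leqNgt js.
have nZK : ne (fadd Z K) by apply: (ne_pos (i := sp K)); rewrite /fadd addn_gt0 Ks orbT.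
rewrite nZK spZK.
have Hsf : forall o, sf (fadd Z K) (sp K, o) = fadd Z (sf K (sp K, o)).
  move=> o; apply: funext => i; rewrite /sf /step_frontier /fadd /=.
  rewrite addnA; congr (_ + _)%N; case: eqP => [->|_]; last by rewrite !subn0.
  by rewrite addnBA.
have HK' : forall o, forall i j : 'I_T.+1, (0 < sf K (sp K, o) i)%N -> (0 < Z j)%N -> (i <= j)%N.
  move=> o i j; rewrite /sf /step_frontier /=.
  case: o => [zs|]; last first.
    by rewrite addn0 => Ki Zj; apply: HK Zj; exact: leq_trans Ki (leq_subr _ _).
  move=> Ki Zj; move: Ki; case: (ltnP i (sp K)) => [isp|_] Ki.
    by apply: ltnW; exact: leq_trans isp (HK _ _ Ks Zj).
  by rewrite addn0 in Ki; apply: HK Zj; exact: leq_trans Ki (leq_subr _ _).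
rewrite Hsf IH //; last exact: HK'.
congr (Bp _ (_ + _ * _)); apply: E_ext => zs _.
by rewrite Hsf IH //; exact: HK'.
Qed.

Lemma W_ge0 n K : 0 <= W n K.
Proof. exact: G_ge0. Qed.

Lemma Lam_ge0 K u n : (forall k, 0 <= u k) -> 0 <= Lam K u n.
Proof. exact: G_ge0. Qed.

Lemma gmM_ge0 x : 0 <= x -> 0 <= gm%:E * x.
Proof. by move=> x0; apply: mule_ge0 => //; exact: gm0E. Qed.

Lemma W_unf K n : ne K -> W n.+1 K = Bp (gm%:E * W n (sf K (sp K, None)))
   ((gm ^+ sp K)%:E + gm%:E * E (sp K) (fun zs => W n (sf K (sp K, Some zs)))).
Proof. by move=> nK; rewrite /W /= nK. Qed.

Lemma Lam_unf K v n : ne K -> Lam K v n.+1 = Bp (gm%:E * Lam (sf K (sp K, None)) v n)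
   (0 + gm%:E * E (sp K) (fun zs => Lam (sf K (sp K, Some zs)) v n)).
Proof. by move=> nK; rewrite /Lam /= nK. Qed.

Lemma G_affine n K u : (forall k, 0 <= u k) -> G true n K u = W n K + Lam K u n.
Proof.
move=> u0; elim: n K => [|n IH] K; first by rewrite /W /Lam /= add0e.
case nK: (ne K); last by rewrite /W /Lam /= nK add0e.
rewrite W_unf // Lam_unf // /= nK.
rewrite IH add0e -Bp_add; last 4 first.
- by apply: gmM_ge0; exact: W_ge0.
- apply: adde_ge0; first exact: gmn0E.
  by apply: gmM_ge0; apply: Ege0 => zs; exact: W_ge0.
- by apply: gmM_ge0; exact: Lam_ge0.
- by apply: gmM_ge0; apply: Ege0 => zs; exact: Lam_ge0.
congr Bp; first by rewrite ge0_muleDr //; [exact: W_ge0|exact: Lam_ge0].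
rewrite -addeA; congr (_ + _).
rewrite -ge0_muleDr; last 2 first.
- by apply: Ege0 => zs; exact: W_ge0.
- by apply: Ege0 => zs; exact: Lam_ge0.
congr (_ * _); rewrite -Eadd; last 2 first.
- by move=> zs; exact: W_ge0.
- by move=> zs; exact: Lam_ge0.
by apply: E_ext => zs _; rewrite /= IH.
Qed.

Lemma Lam_add K u w n : (forall k, 0 <= u k) -> (forall k, 0 <= w k) ->
  Lam K (fun k => u k + w k) n = Lam K u n + Lam K w n.
Proof.
move=> u0 w0; elim: n K => [|n IH] K /=; first by rewrite add0e.
rewrite /Lam /=; case: ifP => nK //.
rewrite -Bp_add; last 4 first.
- by apply: gmM_ge0; exact: Lam_ge0.
- by rewrite add0e; apply: gmM_ge0; apply: Ege0 => zs; exact: Lam_ge0.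
- by apply: gmM_ge0; exact: Lam_ge0.
- by rewrite add0e; apply: gmM_ge0; apply: Ege0 => zs; exact: Lam_ge0.
rewrite !add0e; congr Bp.
  by rewrite -ge0_muleDr; [rewrite -IH|exact: Lam_ge0|exact: Lam_ge0].
rewrite -ge0_muleDr; last 2 first.
- by apply: Ege0 => zs; exact: Lam_ge0.
- by apply: Ege0 => zs; exact: Lam_ge0.
congr (_ * _); rewrite -Eadd; last 2 first.
- by move=> zs; exact: Lam_ge0.
- by move=> zs; exact: Lam_ge0.
by apply: E_ext => zs _; rewrite -IH.
Qed.

Lemma Lam_scale K (x : R) u n : (0 <= x)%R -> (forall k, 0 <= u k) ->
  Lam K (fun k => x%:E * u k) n = x%:E * Lam K u n.
Proof.
move=> x0 u0; elim: n K => [|n IH] K; first by rewrite /Lam /= mule0.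
case nK: (ne K); last by rewrite /Lam /= nK.
rewrite !Lam_unf // IH.
under E_ext => zs _ do rewrite IH.
rewrite !add0e -Bp_scale; last 2 first.
- by apply: gmM_ge0; exact: Lam_ge0.
- by apply: gmM_ge0; apply: Ege0 => zs; exact: Lam_ge0.
rewrite muleCA; congr Bp.
rewrite Escale; first by rewrite muleCA.
by move=> zs; exact: Lam_ge0.
Qed.

Lemma Lam_E K j (w : seq nat -> nat -> \bar R) n : (forall zs k, 0 <= w zs k) ->
  Lam K (fun k => E j (fun zs => w zs k)) n = E j (fun zs => Lam K (w zs) n).
Proof.
move=> w0; elim: n K => [|n IH] K; first by rewrite /Lam /= Ecst.
case nK: (ne K); last by rewrite /Lam /= nK.
under [in RHS]E_ext => zs _ do rewrite Lam_unf //.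
rewrite Lam_unf // IH.
have -> : E (sp K) (fun zs => Lam (sf K (sp K, Some zs)) (fun k => E j (fun zs' => w zs' k)) n)
  = E (sp K) (fun zs => E j (fun zs' => Lam (sf K (sp K, Some zs)) (w zs') n)).
  by apply: E_ext => zs _; exact: IH.
rewrite -Bp_E; last 2 first.
- by move=> zs; apply: gmM_ge0; exact: Lam_ge0.
- by move=> zs; rewrite add0e; apply: gmM_ge0; apply: Ege0 => zs'; exact: Lam_ge0.
rewrite !add0e; congr Bp; first by rewrite Escale //; move=> zs; exact: Lam_ge0.
under [in RHS]E_ext => zs _ do rewrite add0e.
rewrite Escale; last by move=> zs; apply: Ege0 => zs'; exact: Lam_ge0.
by rewrite Eswap //; move=> zs zs'; exact: Lam_ge0.
Qed.

Lemma Lam_Bp K w1 w2 n : (forall k, 0 <= w1 k) -> (forall k, 0 <= w2 k) ->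
  Lam K (fun k => Bp (w1 k) (w2 k)) n = Bp (Lam K w1 n) (Lam K w2 n).
Proof.
move=> w10 w20; rewrite /Bp Lam_add; last 2 first.
- by move=> k; apply: mule_ge0 => //; exact: q0E.
- by move=> k; apply: mule_ge0 => //; exact: pp0E.
rewrite [X in X + _]Lam_scale //; last exact: q0.
by rewrite Lam_scale //; exact: pp0.
Qed.

Lemma NE_ge0 x phi : (forall b C, 0 <= phi b C) -> 0 <= NE x phi.
Proof. by move=> ph0; apply: Bp_ge0 => //; exact: Ege0. Qed.

Lemma Lam_NE K x (w : bool -> fr -> nat -> \bar R) n : (forall b C k, 0 <= w b C k) ->
  Lam K (fun k => NE x (fun b C => w b C k)) n = NE x (fun b C => Lam K (w b C) n).
Proof.
move=> w0; rewrite /NE Lam_Bp //; last by move=> k; apply: Ege0.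
by rewrite Lam_E.
Qed.

Definition Sh (w : nat -> \bar R) (k : nat) : \bar R :=
  match k with 0%N => 0 | k'.+1 => gm%:E * w k' end.

Lemma Sh_ge0 w k : (forall k, 0 <= w k) -> 0 <= Sh w k.
Proof. by move=> w0; case: k => //= k; apply: gmM_ge0. Qed.

Lemma Lam_empty K w n : ~~ ne K -> (0 < n)%N -> Lam K w n = w n.
Proof. by move=> nK; case: n => //= n _; rewrite /Lam /= (negbTE nK). Qed.

Lemma Lam_unfold K v n : ne K -> (forall k, 0 <= v k) ->
  Lam K v n.+1 = gm%:E * Bp (Lam (sf K (sp K, None)) v n)
                         (E (sp K) (fun zs => Lam (sf K (sp K, Some zs)) v n)).
Proof.
move=> nK v0; rewrite /Lam /= nK add0e -Bp_scale //; first exact: Lam_ge0.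
by apply: Ege0 => zs; exact: Lam_ge0.
Qed.

Lemma Lam_S K w n : w 0%N = 0 -> (forall k, 0 <= w k) -> Lam K (Sh w) n = Sh (Lam K w) n.
Proof.
move=> w00 w0; elim: n K => [|n IH] K //.
case nK: (ne K); last first.
  rewrite Lam_empty ?nK //=; case: n {IH} => [|n]; first by rewrite w00 /Lam.
  by rewrite Lam_empty ?nK.
rewrite Lam_unfold //; last by move=> k; exact: Sh_ge0.
rewrite IH /=.
transitivity (gm%:E * Bp (Sh (Lam (sf K (sp K, None)) w) n)
                (E (sp K) (fun zs => Sh (Lam (sf K (sp K, Some zs)) w) n))).
  by congr (_ * Bp _ _); apply: E_ext => zs _; rewrite IH.
case: n {IH} => [|n] /=.
  by rewrite /Lam /= Ecst // /Bp !mule0 adde0 mule0.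
rewrite Lam_unfold //; congr (_ * _).
rewrite Escale; last by move=> zs; exact: Lam_ge0.
rewrite Bp_scale //; first exact: Lam_ge0.
by apply: Ege0 => zs; exact: Lam_ge0.
Qed.

Lemma Lam0 K v : Lam K v 0 = 0.
Proof. by []. Qed.

Lemma Lam_ext K v v' n : (forall k, (0 < k)%N -> v k = v' k) -> Lam K v n = Lam K v' n.
Proof. exact: G_ext. Qed.

Lemma Lam_comm K K' v n : (forall k, 0 <= v k) ->
  Lam K (fun k => Lam K' v k) n = Lam K' (fun k => Lam K v k) n.
Proof.
move=> v0; elim: n K K' => [|n IH] K K' //.
have L0 : forall K0 k, 0 <= Lam K0 v k by move=> K0 k; exact: Lam_ge0.
case nK: (ne K); last first.
  rewrite Lam_empty ?nK //; apply: Lam_ext => k k0; rewrite Lam_empty ?nK //.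
case nK': (ne K'); last first.
  rewrite [RHS]Lam_empty ?nK' //; apply: Lam_ext => k k0; rewrite Lam_empty ?nK' //.
rewrite Lam_unfold // IH.
have -> : E (sp K) (fun zs => Lam (sf K (sp K, Some zs)) (fun k => Lam K' v k) n) =
          E (sp K) (fun zs => Lam K' (fun k => Lam (sf K (sp K, Some zs)) v k) n).
  by apply: E_ext => zs _; exact: IH.
have -> : (fun k => Lam K v k) = Sh (fun k => Bp (Lam (sf K (sp K, None)) v k)
                         (E (sp K) (fun zs => Lam (sf K (sp K, Some zs)) v k))).
  by apply: funext => -[|k] //=; rewrite Lam_unfold.
rewrite Lam_S /=; last 2 first.
- by rewrite /Lam /= Ecst // Bp_cst.
- by move=> k; apply: Bp_ge0 => //; apply: Ege0 => zs.
rewrite Lam_Bp //; last by move=> k; apply: Ege0 => zs.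
by rewrite Lam_E.
Qed.

Lemma Lam_cst_le K (c : R) u n : (0 <= c)%R -> (forall k, 0 <= u k) ->
  (forall k, u k <= c%:E) -> Lam K u n <= c%:E.
Proof.
move=> c0 u0 uc; elim: n K => [|n IH] K; first by rewrite Lam0 lee_fin.
case nK: (ne K); last by rewrite Lam_empty ?nK.
rewrite Lam_unfold //.
apply: (@le_trans _ _ (gm%:E * c%:E)).
  apply: lee_wpmul2l; first exact: gm0E.
  rewrite -[X in _ <= X](@Bp_cst c%:E) ?lee_fin //.
  apply: Bp_le; first exact: Lam_ge0.
  - by apply: Ege0 => zs; exact: Lam_ge0.
  - exact: IH.
  rewrite -[X in _ <= X](@Ecst (sp K) c%:E) ?lee_fin //.
  by apply: Ele => zs; [exact: Lam_ge0|exact: IH].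
rewrite -EFinM lee_fin -[X in (_ <= X)%R]mul1r ler_wpM2r //; exact: gm1.
Qed.

Lemma NE_le x phi phi' : (forall b C, 0 <= phi b C) -> (forall b C, phi b C <= phi' b C) ->
  NE x phi <= NE x phi'.
Proof.
move=> ph0 ph; apply: Bp_le => //; first exact: Ege0.
by apply: Ele.
Qed.

Lemma NE_add x phi psi : (forall b C, 0 <= phi b C) -> (forall b C, 0 <= psi b C) ->
  NE x (fun b C => phi b C + psi b C) = NE x phi + NE x psi.
Proof.
move=> ph0 ps0; rewrite /NE Eadd // Bp_add //; exact: Ege0.
Qed.

Lemma NE_scale x (c : R) phi : (0 <= c)%R -> (forall b C, 0 <= phi b C) ->
  NE x (fun b C => c%:E * phi b C) = c%:E * NE x phi.
Proof.
move=> c0 ph0; rewrite /NE Escale // Bp_scale //; exact: Ege0.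
Qed.

Lemma NE_cst x c : 0 <= c -> NE x (fun _ _ => c) = c.
Proof. by move=> c0; rewrite /NE Ecst // Bp_cst. Qed.

Lemma NE_E x j (psi : seq nat -> bool -> fr -> \bar R) : (forall zs b C, 0 <= psi zs b C) ->
  NE x (fun b C => E j (fun zs => psi zs b C)) = E j (fun zs => NE x (psi zs)).
Proof.
move=> ps0; rewrite /NE Eswap // Bp_E //.
by move=> zs; apply: Ege0.
Qed.

Lemma Bp_inter a b c d : 0 <= a -> 0 <= b -> 0 <= c -> 0 <= d ->
  Bp (Bp a b) (Bp c d) = Bp (Bp a c) (Bp b d).
Proof.
move=> a0 b0 c0 d0.
have q0' := q0E; have p0' := pp0E.
rewrite /Bp !ge0_muleDr; try (apply: mule_ge0 => //).
rewrite !muleA -!EFinM [(p * (1 - p))%R]mulrC.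
by rewrite addeACA.
Qed.

Lemma NE_swap x y (phi : bool -> fr -> bool -> fr -> \bar R) :
  (forall b C b' C', 0 <= phi b C b' C') ->
  NE x (fun b C => NE y (fun b' C' => phi b C b' C')) =
  NE y (fun b' C' => NE x (fun b C => phi b C b' C')).
Proof.
move=> ph0.
rewrite {1}/NE -Bp_E; last 2 first.
- by move=> zs; apply: ph0.
- by move=> zs; apply: Ege0.
rewrite [in RHS]/NE -[in RHS]Bp_E; last 2 first.
- by move=> zs; apply: ph0.
- by move=> zs; apply: Ege0.
rewrite Eswap //.
rewrite Bp_inter //; try exact: Ege0.
by apply: Ege0 => zs; apply: Ege0.
Qed.

Definition low (x : nat) (K : fr) := forall i : 'I_T.+1, (0 < K i)%N -> (i < x)%N.

Lemma low_fz x : low x fz. Proof. by move=> i. Qed.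
Lemma low_ch x zs : low x (ch x zs).
Proof. by move=> i; rewrite /ch; case: ifP. Qed.

Lemma NE_ext_low x phi phi' : (forall b K, low x K -> phi b K = phi' b K) -> NE x phi = NE x phi'.
Proof.
move=> H; rewrite /NE H; last exact: low_fz.
by congr Bp; apply: E_ext => zs _; apply: H; exact: low_ch.
Qed.

Definition hi (m h : nat) (e : seq nat) : fr :=
  fun i => if (m <= i)%N && (i < h)%N then nth 0%N e (i - m) else 0%N.

Lemma ch_cat m h c e : size c = m -> (m <= h)%N -> ch h (c ++ e) = fadd (ch m c) (hi m h e).
Proof.
move=> sc mh; apply: funext => i; rewrite /ch /hi /fadd nth_cat sc.
case: (ltnP i m) => im /=.
  by rewrite (leq_trans im mh) addn0.
by rewrite add0n.
Qed.

Lemma E_aff j a (c : R) t : 0 <= a -> (0 <= c)%R -> (forall e, 0 <= t e) ->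
  E j (fun e => a + c%:E * t e) = a + c%:E * E j t.
Proof.
move=> a0 c0 t0; rewrite Eadd //; last by move=> e; apply: mule_ge0 => //; rewrite lee_fin.
by rewrite Ecst // Escale.
Qed.

Lemma NE_split m h phi : (m <= h)%N -> (forall b C, 0 <= phi b C) ->
  NE h phi = NE m (fun b K => E (h - m) (fun e => phi b (fadd K (bK b (hi m h e))))).
Proof.
move=> mh ph0; rewrite /NE /= fadd0 Ecst //; congr Bp.
have -> : E h (fun zs => phi true (ch h zs)) = E (m + (h - m)) (fun zs => phi true (ch h zs)).
  by rewrite subnKC.
rewrite E_split.
apply: E_ext => c sc; apply: E_ext => e _.
by rewrite (ch_cat _ sc mh).
Qed.

Lemma NE_rew x (c : R) : (0 <= c)%R -> NE x (fun b _ => if b then c%:E else 0) = (p * c)%:E.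
Proof. by move=> c0; rewrite /NE /Bp /= Ecst ?lee_fin // mule0 add0e EFinM. Qed.

Lemma sp_e1 m : sp (e1 m) = m.
Proof.
apply: sp_eq; first by rewrite /e1 eqxx.
by move=> j jm; rewrite /e1; case: eqP => // jm'; rewrite jm' ltnn in jm.
Qed.

Lemma ne_e1 m : ne (e1 m).
Proof. by apply: (ne_pos (i := m)); rewrite /e1 eqxx. Qed.

Definition rw (x : nat) (b : bool) : \bar R := if b then (gm ^+ x)%:E else 0.

Lemma rw_ge0 x b : 0 <= rw x b.
Proof. by case: b => //; exact: gmn0E. Qed.

Definition QvK n (Z : fr) (x : nat) :=
  NE x (fun b C => rw x b + gm%:E * W n (fadd Z C)).

Lemma W_step n f : ne f -> W n.+1 f = QvK n (fsub1 f (sp f)) (sp f).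
Proof. by move=> nf; rewrite /W G_step. Qed.

Lemma QvK_ge0 n Z x : 0 <= QvK n Z x.
Proof.
apply: NE_ge0 => b C; apply: adde_ge0; first exact: rw_ge0.
by apply: gmM_ge0; exact: W_ge0.
Qed.

Lemma G_le_upto r n K u u' : (forall k, 0 <= u k) -> (forall k, (k <= n)%N -> u k <= u' k) ->
  G r n K u <= G r n K u'.
Proof.
move=> u0; elim: n K => [|n IH] K uu //=.
have uu' : forall k, (k <= n)%N -> u k <= u' k by move=> k kn; apply: uu; exact: leqW.
case: ifP => _; last exact: uu.
apply: Bp_le.
- by apply: mule_ge0; [exact: gm0E|exact: G_ge0 u0].
- apply: adde_ge0; first by case: (r) => //; exact: gmn0E.
  apply: mule_ge0; first exact: gm0E.
  by apply: Ege0 => zs; exact: G_ge0 u0.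
- by apply: lee_wpmul2l; [exact: gm0E|exact: IH].
apply: leeD2l; apply: lee_wpmul2l; first exact: gm0E.
by apply: Ele => zs; [exact: G_ge0 u0|exact: IH].
Qed.

Lemma W_block n (Z K : fr) : (forall i j : 'I_T.+1, (0 < K i)%N -> (0 < Z j)%N -> (i <= j)%N) ->
  W n (fadd Z K) = W n K + Lam K (fun k => W k Z) n.
Proof.
move=> HK; rewrite /W block // G_affine //.
by move=> k; exact: W_ge0.
Qed.

Lemma NE_ext x phi phi' : (forall b K, phi b K = phi' b K) -> NE x phi = NE x phi'.
Proof. by move=> H; congr NE; apply: funext => b; apply: funext => K. Qed.

Lemma NE_le_low x phi phi' : (forall b C, 0 <= phi b C) ->
  (forall b K, low x K -> phi b K <= phi' b K) -> NE x phi <= NE x phi'.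
Proof.
move=> ph0 ph; apply: Bp_le => //; first exact: Ege0.
- by apply: ph; exact: low_fz.
by apply: Ele => // zs; apply: ph; exact: low_ch.
Qed.

Lemma QB (m : 'I_T.+1) K v n : (forall k, 0 <= v k) ->
  Lam K (fun k => Lam (e1 m) v k) n =
  Sh (fun k => NE m (fun b' K' => Lam K (fun j => Lam K' v j) k)) n.
Proof.
move=> v0.
have -> : (fun k => Lam (e1 m) v k) = Sh (fun k => NE m (fun b' K' => Lam K' v k)).
  apply: funext => -[|k] //=.
  rewrite Lam_unfold ?ne_e1 // sp_e1 sf_None fsub1_e1 /NE.
  by congr (_ * Bp _ _); apply: E_ext => zs _; rewrite sf_Some fsub1_e1 fadd0l.
rewrite Lam_S; last 2 first.
- by rewrite NE_cst.
- by move=> k; apply: NE_ge0 => b C; exact: Lam_ge0.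
congr (Sh _ n); apply: funext => k.
by rewrite Lam_NE // => b C j; exact: Lam_ge0.
Qed.

Lemma W_e1 (m : 'I_T.+1) k : W k.+1 (e1 m) = (p * gm ^+ m)%:E + NE m (fun b K => gm%:E * W k K).
Proof.
rewrite W_step ?ne_e1 // sp_e1 fsub1_e1 /QvK.
rewrite (@NE_ext _ _ (fun b K => rw m b + gm%:E * W k K)); last first.
  by move=> b K; rewrite fadd0l.
rewrite NE_add; first last.
- by move=> b C; apply: gmM_ge0; exact: W_ge0.
- by move=> b C; exact: rw_ge0.
by rewrite /rw NE_rew //; apply: exprn_ge0; exact: gm0.
Qed.

Lemma NEhead (m : nat) (x : nat) k : NE m (fun b K => rw x b + gm%:E * W k K) =
  (p * gm ^+ x)%:E + NE m (fun b K => gm%:E * W k K).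
Proof.
rewrite NE_add; first last.
- by move=> b C; apply: gmM_ge0; exact: W_ge0.
- by move=> b C; exact: rw_ge0.
by rewrite /rw NE_rew //; apply: exprn_ge0; exact: gm0.
Qed.


Section Key.
Variables (m h : 'I_T.+1) (Y : fr).
Hypothesis mh : (m < h)%N.
Hypothesis HY : forall j : 'I_T.+1, (0 < Y j)%N -> (m <= j)%N.

Let mh' : (m <= h)%N. Proof. exact: ltnW. Qed.

Definition vv (b : bool) (e : seq nat) (j : nat) := W j (fadd Y (bK b (hi m h e))).

Lemma vv_ge0 b e j : 0 <= vv b e j. Proof. exact: W_ge0. Qed.

Lemma HYhi b e : forall j : 'I_T.+1, (0 < fadd Y (bK b (hi m h e)) j)%N -> (m <= j)%N.
Proof.
move=> j; rewrite /fadd addn_gt0 => /orP[/HY //|].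
case: b => //=; rewrite /hi; case: ifP => // /andP[] //.
Qed.

Lemma QA n : QvK n (fadd Y (e1 m)) h =
  NE m (fun b K => (rw h b + gm%:E * (W n K + Lam K (fun k => W k (e1 m)) n)) +
                   gm%:E * E (h - m) (fun e => Lam K (Lam (e1 m) (vv b e)) n)).
Proof.
rewrite /QvK (NE_split mh'); last first.
  by move=> b C; apply: adde_ge0; [exact: rw_ge0|apply: gmM_ge0; exact: W_ge0].
apply: NE_ext_low => b K lowK.
transitivity (E (h - m) (fun e => (rw h b + gm%:E * (W n K + Lam K (fun k => W k (e1 m)) n)) +
                   gm%:E * Lam K (Lam (e1 m) (vv b e)) n)); last first.
  rewrite E_aff; first reflexivity.
  - apply: adde_ge0; first exact: rw_ge0.
    apply: gmM_ge0; apply: adde_ge0; first exact: W_ge0.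
    by apply: Lam_ge0 => k; exact: W_ge0.
  - exact: gm0.
  - by move=> e; apply: Lam_ge0 => k; apply: Lam_ge0 => j; exact: vv_ge0.
apply: E_ext => e _.
have -> : fadd (fadd Y (e1 m)) (fadd K (bK b (hi m h e))) =
          fadd (fadd (fadd Y (bK b (hi m h e))) (e1 m)) K.
  by apply: funext => i; rewrite /fadd; lia.
rewrite W_block; last first.
  move=> i j /lowK im; rewrite /fadd addn_gt0 => /orP[/HYhi|]; first exact: leq_trans (ltnW im).
  by rewrite /e1; case: eqP => // -> _; exact: ltnW.
have -> : (fun k => W k (fadd (fadd Y (bK b (hi m h e))) (e1 m))) =
          (fun k => W k (e1 m) + Lam (e1 m) (vv b e) k).
  apply: funext => k; rewrite W_block //.
  by move=> i j; rewrite /e1; case: eqP => // -> _ /HYhi.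
rewrite Lam_add; first last.
- by move=> k; apply: Lam_ge0 => j; exact: vv_ge0.
- by move=> k; exact: W_ge0.
rewrite -!addeA; congr (_ + _).
rewrite addeA ge0_muleDr //.
- apply: adde_ge0; first exact: W_ge0.
  by apply: Lam_ge0 => k; exact: W_ge0.
- by apply: Lam_ge0 => k; apply: Lam_ge0 => j; exact: vv_ge0.
Qed.


Lemma QC k : QvK k Y h = NE m (fun b' K' => (rw h b' + gm%:E * W k K') +
                   gm%:E * E (h - m) (fun e => Lam K' (vv b' e) k)).
Proof.
rewrite /QvK (NE_split mh'); last first.
  by move=> b C; apply: adde_ge0; [exact: rw_ge0|apply: gmM_ge0; exact: W_ge0].
apply: NE_ext_low => b K lowK.
transitivity (E (h - m) (fun e => (rw h b + gm%:E * W k K) + gm%:E * Lam K (vv b e) k)); last first.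
  rewrite E_aff; first reflexivity.
  - by apply: adde_ge0; [exact: rw_ge0|apply: gmM_ge0; exact: W_ge0].
  - exact: gm0.
  - by move=> e; apply: Lam_ge0 => j; exact: vv_ge0.
apply: E_ext => e _.
have -> : fadd Y (fadd K (bK b (hi m h e))) = fadd (fadd Y (bK b (hi m h e))) K.
  by apply: funext => i; rewrite /fadd; lia.
rewrite W_block; last first.
  by move=> i j /lowK im /HYhi; exact: leq_trans (ltnW im).
rewrite -addeA ge0_muleDr //; first exact: W_ge0.
by apply: Lam_ge0 => j; exact: W_ge0.
Qed.

Definition Ah k := match k with 0%N => 0 | k'.+1 => NE m (fun b K => rw h b + gm%:E * W k' K) end.
Definition dlt : R := p * (gm ^+ m - gm ^+ h).
Definition dl k : \bar R := match k with 0%N => 0 | _.+1 => dlt%:E end.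

Lemma dlt_ge0 : (0 <= dlt)%R.
Proof.
rewrite /dlt mulr_ge0 ?pp0 // subr_ge0.
apply: ler_wiXn2l; [exact: gm0|exact: gm1|exact: mh'].
Qed.

Lemma Ah_ge0 k : 0 <= Ah k.
Proof.
case: k => //= k; apply: NE_ge0 => b C.
by apply: adde_ge0; [exact: rw_ge0|apply: gmM_ge0; exact: W_ge0].
Qed.

Lemma dl_ge0 k : 0 <= dl k.
Proof. by case: k => //= k; rewrite lee_fin; exact: dlt_ge0. Qed.

Lemma W_e1_split k : W k (e1 m) = Ah k + dl k.
Proof.
case: k => [|k]; first by rewrite adde0.
rewrite W_e1 /= NEhead addeAC -EFinD.
congr (_ + _); congr (_%:E).
by rewrite /dlt mulrBr addrC subrK.
Qed.


Definition TQ n := NE m (fun b K => gm%:E * E (h - m)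
   (fun e => Sh (fun k => NE m (fun b' K' => Lam K (fun j => Lam K' (vv b e) j) k)) n)).
Definition TP n := NE m (fun b K => gm%:E * Sh (fun k => NE m (fun b' K' =>
   E (h - m) (fun e => Lam K (fun j => Lam K' (vv b' e) j) k))) n).

Lemma LL0 K K' b e k : 0 <= Lam K (fun j => Lam K' (vv b e) j) k.
Proof. by apply: Lam_ge0 => j; apply: Lam_ge0 => i; exact: vv_ge0. Qed.

Lemma LHS_form n : QvK n (fadd Y (e1 m)) h =
  NE m (fun b K => rw h b + gm%:E * (W n K + Lam K Ah n)) +
  NE m (fun b K => gm%:E * Lam K dl n) + TQ n.
Proof.
rewrite QA /TQ -!NE_add; last 4 first.
- move=> b C; apply: adde_ge0.
    apply: adde_ge0; first exact: rw_ge0.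
    apply: gmM_ge0; apply: adde_ge0; first exact: W_ge0.
    by apply: Lam_ge0; exact: Ah_ge0.
  by apply: gmM_ge0; apply: Lam_ge0; exact: dl_ge0.
- by move=> b C; apply: gmM_ge0; apply: Ege0 => e; apply: Sh_ge0 => k;
     apply: NE_ge0 => b' C'; exact: LL0.
- move=> b C; apply: adde_ge0; first exact: rw_ge0.
  apply: gmM_ge0; apply: adde_ge0; first exact: W_ge0.
  by apply: Lam_ge0; exact: Ah_ge0.
- by move=> b C; apply: gmM_ge0; apply: Lam_ge0; exact: dl_ge0.
apply: NE_ext => b K.
have -> : (fun k => W k (e1 m)) = (fun k => Ah k + dl k).
  by apply: funext => k; rewrite W_e1_split.
rewrite Lam_add; [|exact: Ah_ge0|exact: dl_ge0].
have -> : E (h - m) (fun e => Lam K (fun k => Lam (e1 m) (vv b e) k) n) =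
          E (h - m) (fun e => Sh (fun k => NE m (fun b' K' => Lam K (fun j => Lam K' (vv b e) j) k)) n).
  by apply: E_ext => e _; rewrite QB //; exact: vv_ge0.
congr (_ + _).
rewrite addeA -[in RHS]addeA -[in RHS]ge0_muleDr; first last.
- by apply: Lam_ge0; exact: dl_ge0.
- apply: adde_ge0; first exact: W_ge0.
  by apply: Lam_ge0; exact: Ah_ge0.
by rewrite -addeA.
Qed.

Lemma tail_eq n : TQ n = TP n.
Proof.
rewrite /TQ /TP; case: n => [|n] /=.
  rewrite (@NE_ext _ _ (fun _ _ => 0)); last by move=> b K; rewrite Ecst // mule0.
  by rewrite (@NE_ext _ (fun b K => gm%:E * 0) (fun _ _ => 0)) // => b K; rewrite mule0.
have gg : (0 <= gm * gm)%R by apply: mulr_ge0; exact: gm0.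
rewrite (@NE_ext _ _ (fun b K => (gm * gm)%:E * NE m (fun b' K' =>
          E (h - m) (fun e => Lam K (fun j => Lam K' (vv b e) j) n)))); last first.
  move=> b K; rewrite Escale; last by move=> e; apply: NE_ge0 => b' C'; exact: LL0.
  rewrite -NE_E; last by move=> e b' C'; exact: LL0.
  by rewrite muleA -EFinM.
rewrite [RHS](@NE_ext _ _ (fun b K => (gm * gm)%:E * NE m (fun b' K' =>
          E (h - m) (fun e => Lam K' (fun j => Lam K (vv b' e) j) n)))); last first.
  move=> b K; rewrite muleA -EFinM; congr (_ * _); apply: NE_ext => b' K'.
  by apply: E_ext => e _; rewrite Lam_comm //; exact: vv_ge0.
rewrite !NE_scale //; first last.
- by move=> b C; apply: NE_ge0 => b' C'; apply: Ege0 => e; exact: LL0.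
- by move=> b C; apply: NE_ge0 => b' C'; apply: Ege0 => e; exact: LL0.
congr (_ * _).
by rewrite NE_swap // => b C b' C'; apply: Ege0 => e; exact: LL0.
Qed.


Lemma NE_rw (x' : nat) (x : nat) (psi : bool -> fr -> \bar R) : (forall b C, 0 <= psi b C) ->
  NE x' (fun b K => rw x b + psi b K) = (p * gm ^+ x)%:E + NE x' psi.
Proof.
move=> ps0; rewrite NE_add //; last by move=> b C; exact: rw_ge0.
by rewrite /rw NE_rew //; apply: exprn_ge0; exact: gm0.
Qed.

Definition TTT k := NE m (fun b' K' => E (h - m) (fun e => Lam K' (vv b' e) k)).

Lemma TTT_ge0 k : 0 <= TTT k.
Proof. by apply: NE_ge0 => b C; apply: Ege0 => e; apply: Lam_ge0; exact: vv_ge0. Qed.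

Lemma QC' k : QvK k Y h = Ah k.+1 + gm%:E * TTT k.
Proof.
rewrite QC /Ah /TTT -NE_scale; first last.
- by move=> b' C'; apply: Ege0 => e; apply: Lam_ge0; exact: vv_ge0.
- exact: gm0.
rewrite -NE_add //.
- by move=> b' C'; apply: adde_ge0; [exact: rw_ge0|apply: gmM_ge0; exact: W_ge0].
- by move=> b' C'; apply: gmM_ge0; apply: Ege0 => e; apply: Lam_ge0; exact: vv_ge0.
Qed.

Lemma RHS_form n : (forall k, (k < n)%N -> QvK k Y h <= W k.+1 (fadd Y (e1 h))) ->
  NE m (fun b K => rw m b + gm%:E * (W n K + Lam K Ah n)) + TP n <= QvK n (fadd Y (e1 h)) m.
Proof.
move=> IHk.
have X0 : forall b K, 0 <= rw m b + gm%:E * (W n K + Lam K Ah n).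
  move=> b K; apply: adde_ge0; first exact: rw_ge0.
  apply: gmM_ge0; apply: adde_ge0; first exact: W_ge0.
  by apply: Lam_ge0; exact: Ah_ge0.
have T0 : forall (b : bool) (K : fr), 0 <= gm%:E * Sh (fun k => NE m (fun b' K' =>
   E (h - m) (fun e => Lam K (fun j => Lam K' (vv b' e) j) k))) n.
  by move=> b K; apply: gmM_ge0; apply: Sh_ge0 => k; apply: NE_ge0 => b' C';
     apply: Ege0 => e; exact: LL0.
rewrite /TP -NE_add //.
rewrite /QvK; apply: NE_le_low; first by move=> b K; apply: adde_ge0; [exact: X0|exact: T0].
move=> b K lowK.
rewrite W_block; last first.
  move=> i j /lowK im; rewrite /fadd addn_gt0 => /orP[/HY|]; first exact: leq_trans (ltnW im).
  by rewrite /e1; case: eqP => // -> _; exact: leq_trans (ltnW im) (ltnW mh).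
set Lb := fun k => Ah k + Sh TTT k.
have LbE : Lam K Lb n = Lam K Ah n + Sh (fun k => NE m (fun b' K' =>
   E (h - m) (fun e => Lam K (fun j => Lam K' (vv b' e) j) k))) n.
  rewrite /Lb Lam_add; [|exact: Ah_ge0|by move=> k; apply: Sh_ge0; exact: TTT_ge0].
  rewrite Lam_S; last 2 first.
  - by rewrite /TTT (@NE_ext _ _ (fun _ _ => 0)) ?NE_cst // => b' K'; rewrite Ecst.
  - exact: TTT_ge0.
  congr (_ + Sh _ n); apply: funext => k.
  rewrite /TTT Lam_NE; last by move=> b' C' j; apply: Ege0 => e; apply: Lam_ge0; exact: vv_ge0.
  apply: NE_ext => b' K'; rewrite Lam_E //.
  by move=> e j; apply: Lam_ge0; exact: vv_ge0.
have Lble : Lam K Lb n <= Lam K (fun k => W k (fadd Y (e1 h))) n.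
  apply: G_le_upto.
    by move=> k; apply: adde_ge0; [exact: Ah_ge0|apply: Sh_ge0; exact: TTT_ge0].
  move=> [|k] kn; first by rewrite /Lb /= adde0 /W.
  apply: le_trans (IHk k kn).
  by rewrite /Lb /= QC'.
rewrite -addeA leeD2l // -ge0_muleDr; first last.
- by apply: Sh_ge0 => k; apply: NE_ge0 => b' C'; apply: Ege0 => e; exact: LL0.
- by apply: adde_ge0; [exact: W_ge0|apply: Lam_ge0; exact: Ah_ge0].
apply: lee_wpmul2l; first exact: gm0E.
by rewrite -addeA -LbE leeD2l.
Qed.

Lemma key n : (forall k, (k < n)%N -> QvK k Y h <= W k.+1 (fadd Y (e1 h))) ->
  QvK n (fadd Y (e1 m)) h <= QvK n (fadd Y (e1 h)) m.
Proof.
move=> IHk; apply: le_trans (RHS_form IHk).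
rewrite LHS_form tail_eq; apply: leeD2r.
have X0 : forall (b : bool) (K : fr), 0 <= gm%:E * (W n K + Lam K Ah n).
  move=> b K; apply: gmM_ge0; apply: adde_ge0; first exact: W_ge0.
  by apply: Lam_ge0; exact: Ah_ge0.
rewrite !NE_rw //.
set N := NE m _.
have Dd : NE m (fun b K => gm%:E * Lam K dl n) <= dlt%:E.
  apply: (@le_trans _ _ (NE m (fun _ _ => dlt%:E))).
    apply: NE_le => b K; first by apply: gmM_ge0; apply: Lam_ge0; exact: dl_ge0.
    apply: (@le_trans _ _ (1%:E * dlt%:E)); last by rewrite mul1e.
    apply: lee_pmul; [exact: gm0E|by apply: Lam_ge0; exact: dl_ge0|by rewrite lee_fin; exact: gm1|].
    apply: Lam_cst_le; [exact: dlt_ge0|exact: dl_ge0|].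
    by move=> [|k] //=; rewrite lee_fin dlt_ge0.
  by rewrite NE_cst // lee_fin dlt_ge0.
rewrite -addeA [N + _]addeC addeA; apply: leeD2r.
have -> : (p * gm ^+ m)%:E = (p * gm ^+ h)%:E + dlt%:E.
  by rewrite -EFinD /dlt mulrBr addrC subrK.
by apply: leeD2l.
Qed.

End Key.

Lemma main n : forall f (x : 'I_T.+1), (0 < f x)%N -> QvK n (fsub1 f x) x <= W n.+1 f.
Proof.
elim/ltn_ind: n => n IH f x fx.
have nf : ne f := ne_pos fx.
have [Ks Hs] := sp_spec nf.
rewrite W_step //.
have [xm|xm] := eqVneq x (sp f); first by rewrite xm.
have mx : (sp f < x)%N.
  rewrite ltn_neqAle eq_sym xm /= leqNgt; apply/negP => /Hs fx0.
  by rewrite fx0 in fx.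
set m := sp f in Ks Hs mx xm *.
set Y := fsub1 (fsub1 f m) x.
have mxF : (m == x) = false by rewrite eq_sym (negbTE xm).
have E1 : fsub1 f x = fadd Y (e1 m).
  apply: funext => i; rewrite /Y /fsub1 /fadd /e1.
  have [->|im] := eqVneq i m; first by rewrite ?eqxx mxF /=; lia.
  have [->|ix] := eqVneq i x; first by rewrite ?eqxx ?(negbTE xm) ?mxF /=; lia.
  by rewrite ?(negbTE im) ?(negbTE ix) /=; lia.
have E2 : fsub1 f m = fadd Y (e1 x).
  apply: funext => i; rewrite /Y /fsub1 /fadd /e1.
  have [->|im] := eqVneq i m; first by rewrite ?eqxx mxF /=; lia.
  have [->|ix] := eqVneq i x; first by rewrite ?eqxx ?(negbTE xm) ?mxF /=; lia.
  by rewrite ?(negbTE im) ?(negbTE ix) /=; lia.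
have HY : forall j : 'I_T.+1, (0 < Y j)%N -> (m <= j)%N.
  move=> j Yj; rewrite leqNgt; apply/negP => /Hs fj0.
  by move: Yj; rewrite /Y /fsub1 fj0.
rewrite E1 E2; apply: key => // k kn.
have := IH k kn (fadd Y (e1 x)) x.
have -> : fsub1 (fadd Y (e1 x)) x = Y.
  apply: funext => i; rewrite /fsub1 /fadd /e1.
  by case: (i == x) => /=; lia.
by apply; rewrite /fadd /e1 eqxx addn1.
Qed.

Lemma QvK_sf n K (x : 'I_T.+1) : QvK n (fsub1 K x) x =
  Bp (gm%:E * W n (sf K (x, None)))
     ((gm ^+ x)%:E + gm%:E * E x (fun zs => W n (sf K (x, Some zs)))).
Proof.
rewrite /QvK /NE /rw /= sf_None fadd0 add0e; congr Bp.
rewrite E_aff //; [exact: gmn0E|exact: gm0|by move=> zs; exact: W_ge0].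
Qed.

Lemma expR_gm h t : (expR (- beta * (h + t)%:R) = gm ^+ (h + t))%R.
Proof. by rewrite expRM_natr. Qed.

Lemma scale_step t (h : nat) w1 (w2 : seq nat -> \bar R) : 0 <= w1 -> (forall zs, 0 <= w2 zs) ->
  Bp ((gm ^+ t.+1)%:E * w1)
     ((expR (- beta * (h + t)%:R))%:E + E h (fun zs => (gm ^+ t.+1)%:E * w2 zs)) =
  (gm ^+ t)%:E * Bp (gm%:E * w1) ((gm ^+ h)%:E + gm%:E * E h w2).
Proof.
move=> w10 w20.
rewrite -Bp_scale; last 2 first.
- exact: gmM_ge0.
- by apply: adde_ge0; [exact: gmn0E|apply: gmM_ge0; exact: Ege0].
rewrite muleA -EFinM -exprSr; congr Bp.
rewrite ge0_muleDr; [|exact: gmn0E|by apply: gmM_ge0; exact: Ege0].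
rewrite -EFinM -exprD addnC expR_gm; congr (_ + _).
by rewrite muleA -EFinM -exprSr Escale.
Qed.

Lemma greedy_valid : valid_policy (@greedy_policy T).
Proof. by move=> f0 hist nf; rewrite /greedy_policy; exact: (sp_spec nf).1. Qed.

Lemma value_greedy f0 n hist :
  value_n D p beta (@greedy_policy T) f0 n hist =
  (gm ^+ size hist)%:E * W n (cur_frontier f0 hist).
Proof.
elim: n hist => [|n IH] hist /=; first by rewrite mule0.
case nf: (nonempty_frontier _); last by rewrite /W /= /ne nf mule0.
rewrite W_unf // -scale_step; last 2 first.
- exact: W_ge0.
- by move=> zs; exact: W_ge0.
rewrite /Bp; congr (_ * _ + _ * (_ + _)).
- by rewrite IH size_rcons /cur_frontier foldl_rcons.
- by apply: E_ext => zs _; rewrite IH size_rcons /cur_frontier foldl_rcons.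
Qed.

Lemma value_ge0 (pol : policy T) f0 n hist : 0 <= value_n D p beta pol f0 n hist.
Proof.
elim: n hist => [|n IH] hist //=.
case: ifP => // _; apply: Bp_ge0 => //.
apply: adde_ge0; first by rewrite lee_fin expR_ge0.
by apply: Ege0.
Qed.

Lemma value_le (pol : policy T) f0 n hist : valid_policy pol ->
  value_n D p beta pol f0 n hist <= (gm ^+ size hist)%:E * W n (cur_frontier f0 hist).
Proof.
move=> vpol; elim: n hist => [|n IH] hist /=; first by rewrite /W /= mule0.
case nf: (nonempty_frontier _); last by apply: mule_ge0; [exact: gmn0E|exact: W_ge0].
have Hpos := vpol f0 hist nf.
apply: (@le_trans _ _ ((gm ^+ size hist)%:E * QvK n (fsub1 (cur_frontier f0 hist) (pol f0 hist)) (pol f0 hist))); last first.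
  by apply: lee_wpmul2l; [exact: gmn0E|exact: main].
rewrite QvK_sf -scale_step; last 2 first.
- exact: W_ge0.
- by move=> zs; exact: W_ge0.
apply: Bp_le.
- exact: value_ge0.
- apply: adde_ge0; first by rewrite lee_fin expR_ge0.
  by apply: Ege0 => zs; exact: value_ge0.
- by apply: le_trans (IH _) _; rewrite size_rcons /cur_frontier foldl_rcons.
apply: leeD2l; apply: Ele.
- by move=> zs; exact: value_ge0.
by move=> zs; apply: le_trans (IH _) _; rewrite size_rcons /cur_frontier foldl_rcons.
Qed.

Lemma final : valid_policy (@greedy_policy T) /\
  (forall (pol : policy T), valid_policy pol ->
     forall f0 : frontier T,
       (total_value D p beta pol f0 <= total_value D p beta (@greedy_policy T) f0)%E).
Proof.
split; first exact: greedy_valid.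
move=> pol vpol f0; rewrite /total_value.
apply: ge_ereal_sup => _ [n _ <-].
apply: le_trans (@value_le pol f0 n [::] vpol) _.
rewrite -value_greedy.
by apply: ereal_sup_ubound; exists n.
Qed.
End Main.

Unset Implicit Arguments.

Theorem theorem5p1 (R : realType) (T : nat) (D : nat -> R) (p beta : R) :
  (forall k, 0 <= D k) ->
  (\sum_(k <oo) (D k)%:E = 1)%E ->
  0 < p -> p <= 1 ->
  0 < beta ->
  valid_policy (@greedy_policy T) /\
  (forall (pol : policy T), valid_policy pol ->
     forall f0 : frontier T,
       (total_value D p beta pol f0 <= total_value D p beta (@greedy_policy T) f0)%E).
Proof.
move=> D0 D1 p0 p1 b0.
exact: (final T D0 D1 p0 p1 b0).
Qed.
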